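(* Every connected graph $G$ with at least $2$ vertices has a connecting transition set of size $\tau(G)$, where $$\tau(G)=\sum_{C}\begin{cases}|C|-2 & \text{if } G[C] \text{ is connected},\\ |C|-1 & \text{otherwise},\end{cases}$$ the sum ranging over all co-connected components $C$ of $G$ with $|C|\ge 2$.
   Context: All graphs are finite, simple and undirected. $G[X]$ denotes the subgraph induced by $X\subseteq V(G)$. The complement $\bar G$ of $G$ has vertex set $V(G)$ and an edge $xy$ ($x\ne y$) iff $xy\notin E(G)$. A co-connected component of $G$ is (the vertex set of) a connected component of $\bar G$. A transition of a graph $G$ is an unordered pair $\{ab,bc\}$ of two distinct edges of $G$ sharing the vertex $b$ (so $a\neq c$); it is written $abc$. A walk in $G$ is a sequence $(v_1,\dots,v_k)$ of vertices with $v_iv_{i+1}\in E(G)$ for all $i\le k-1$; it leads from $v_1$ to $v_k$. For a set $T$ of transitions of $G$, a walk $(v_1,\dots,v_k)$ is $T$-compatible if for every $i\in[1,k-2]$, either $v_i=v_{i+2}$ or $v_iv_{i+1}v_{i+2}\in T$. The graph $G$ is $T$-connected, and $T$ is a connecting transition set of $G$, if for all vertices $u,v$ of $G$ there is a $T$-compatible walk leading from $u$ to $v$. *)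

(* Defs.v *)
From mathcomp Require Import all_boot.
Set Implicit Arguments. Unset Strict Implicit. Unset Printing Implicit Defensive.

Section Graphs.
Variable T : finType.

Definition simple_graph (e : rel T) : Prop := symmetric e /\ irreflexive e.

Definition graph_connected (e : rel T) : Prop := forall u v : T, connect e u v.

Definition compl_rel (e : rel T) : rel T := fun x y => (x != y) && ~~ e x y.

Definition cocomponents (e : rel T) : {set {set T}} :=
  [set [set y | connect (compl_rel e) x y] | x : T].

Definition induced_rel (e : rel T) (C : {set T}) : rel T :=
  fun x y => [&& e x y, x \in C & y \in C].

Definition induced_connectedb (e : rel T) (C : {set T}) : bool :=
  [forall x in C, forall y in C, connect (induced_rel e C) x y].

Definition tau (e : rel T) : nat :=
  \sum_(C in cocomponents e | 1 < #|C|)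
     (if induced_connectedb e C then #|C| - 2 else #|C| - 1).

(* A transition abc = {ab, bc} (a <> c) is encoded canonically as the pair
   (b, {a, c}), which identifies abc and cba. *)
Definition is_transition (e : rel T) (t : T * {set T}) : Prop :=
  exists a c, [/\ a != c, e a t.1, e t.1 c & t.2 = [set a; c]].

Definition transition_set (e : rel T) (Tr : {set T * {set T}}) : Prop :=
  forall t, t \in Tr -> is_transition e t.

Definition walk (e : rel T) (x : T) (p : seq T) : bool := path e x p.

Definition compatible (Tr : {set T * {set T}}) (x : T) (p : seq T) : Prop :=
  let s := x :: p in
  forall i, i.+2 < size s ->
    nth x s i = nth x s i.+2 \/
    (nth x s i.+1, [set nth x s i; nth x s i.+2]) \in Tr.

Definition T_connected (e : rel T) (Tr : {set T * {set T}}) : Prop :=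
  forall u v : T, exists p : seq T,
    [/\ walk e u p, last u p = v & compatible Tr u p].

End Graphs.

(* Main.v *)
Require Import Defs.
From mathcomp Require Import all_boot zify.
Set Implicit Arguments. Unset Strict Implicit. Unset Printing Implicit Defensive.

Section W.
Variable T : finType.
Implicit Types (Tr : {set T * {set T}}) (A : {set T}).

Definition cnd Tr (x y z : T) : bool := (x == z) || ((y, [set x; z]) \in Tr).

Fixpoint comp Tr (s : seq T) : bool :=
  match s with
  | x :: ((y :: z :: _) as t) => cnd Tr x y z && comp Tr t
  | _ => true
  end.

Lemma compP Tr x0 s : comp Tr s <->
  (forall i, i.+2 < size s -> cnd Tr (nth x0 s i) (nth x0 s i.+1) (nth x0 s i.+2)).
Proof.
elim: s => [|x t IH]; first by split.
case: t IH => [|y [|z u]] IH; try by split => // _ [|[|i]].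
split.
  move=> /= /andP[H1 H2] [|i] Hi //=; exact: (proj1 IH H2 i Hi).
move=> H /=; apply/andP; split; first exact: (H 0).
by apply/IH => i Hi; apply: (H i.+1).
Qed.

Lemma compatibleE Tr x p : compatible Tr x p <-> comp Tr (x :: p).
Proof.
rewrite /compatible (compP _ x) /=; split => H i Hi.
  by rewrite /cnd; case: (H i Hi) => [->|->]; rewrite ?eqxx ?orbT.
by case/orP: (H i Hi) => [/eqP|]; [left|right].
Qed.

Lemma comp_mono Tr Tr' s : Tr \subset Tr' -> comp Tr s -> comp Tr' s.
Proof.
move=> sub; elim: s => [|x t IH] //=.
case: t IH => [|y [|z u]] IH // /andP[H1 H2]; apply/andP; split; last exact: IH.
rewrite /cnd; case/orP: H1 => [->//|/(subsetP sub) ->]; by rewrite orbT.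
Qed.

Lemma compE3 Tr x y z u : comp Tr [:: x, y, z & u] = cnd Tr x y z && comp Tr [:: y, z & u].
Proof. by []. Qed.
Lemma compE2 Tr x y : comp Tr [:: x; y] = true.
Proof. by []. Qed.

Lemma comp_cat Tr r c d s :
  comp Tr (r ++ [:: c, d & s]) = comp Tr (r ++ [:: c; d]) && comp Tr [:: c, d & s].
Proof.
elim: r => [|x r IH]; first by rewrite ?cat0s compE2.
case: r IH => [|y [|z r]] IH.
- by rewrite ?cat0s !cat_cons ?cat0s !compE3 compE2 andbT.
- by rewrite !cat_cons ?cat0s !compE3 compE2 andbT andbA.
- by move: IH; rewrite !cat_cons !compE3 => ->; rewrite andbA.
Qed.

Variable r : rel T.

Definition R (A : {set T}) Tr (x c x' c' : T) : Prop :=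
  exists s, [/\ path r x (c :: s), all (fun v => v \in A) (x :: c :: s),
     comp Tr (x :: c :: s) & exists q, x :: c :: s = q ++ [:: x'; c']].

Lemma R_refl A Tr x c : r x c -> x \in A -> c \in A -> R A Tr x c x c.
Proof. by move=> h hx hc; exists [::]; split; rewrite /= ?h ?hx ?hc //; exists [::]. Qed.

Lemma R3 A Tr x y z : r x y -> r y z -> x \in A -> y \in A -> z \in A ->
  cnd Tr x y z -> R A Tr x y y z.
Proof.
move=> h1 h2 hx hy hz hc; exists [:: z]; split; rewrite /= ?h1 ?h2 ?hx ?hy ?hz ?hc //.
by exists [:: x].
Qed.

Lemma R_trans A Tr x c x' c' x'' c'' :
  R A Tr x c x' c' -> R A Tr x' c' x'' c'' -> R A Tr x c x'' c''.
Proof.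
move=> [s1 [p1 a1 c1 [q1 E1]]] [s2 [p2 a2 c2 [q2 E2]]].
have E : (x :: c :: s1) ++ s2 = q1 ++ (x' :: c' :: s2) by rewrite E1 -catA.
have L : last c s1 = c' by have := congr1 (last x) E1; rewrite last_cat.
exists (s1 ++ s2); split.
- rewrite -cat_cons cat_path p1 /= L; by case/andP: p2.
- rewrite -!cat_cons all_cat a1 /=; by case/and3P: a2.
- by rewrite -!cat_cons E comp_cat -E1 c1 c2.
- by exists (q1 ++ q2); rewrite -!cat_cons E E2 catA.
Qed.

Lemma R_mono A A' Tr Tr' x c x' c' : A \subset A' -> Tr \subset Tr' ->
  R A Tr x c x' c' -> R A' Tr' x c x' c'.
Proof.
move=> sA sT [s [p a cc q]]; exists s; split => //.
  by apply: sub_all a => v /(subsetP sA).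
exact: comp_mono cc.
Qed.

Hypothesis rsym : symmetric r.
Variables (S : {set T}) (a b : T).
Hypotheses (ab : a != b) (rab : r a b) (aS : a \in S) (bS : b \in S).
Hypothesis exitP : forall A, a \in A -> A \subset S -> A != S ->
  exists z y, [/\ z \in A, y \in S, y \notin A & r z y].

Definition tprop (t : T * {set T}) :=
  exists x y, [/\ x != y, r t.1 x, r t.1 y & t.2 = [set x; y]].

Definition Inv A Tr := [/\ a \in A, b \in A, A \subset S, #|Tr| = #|A| - 2 &
  (forall t, t \in Tr -> t.2 \subset A /\ tprop t) /\
  (forall x, x \in A -> exists c, R A Tr x c a b /\ R A Tr a b c x)].

Lemma R_in A Tr x c x' c' : R A Tr x c x' c' -> [/\ r x c, x \in A & c \in A].
Proof. by case=> s [/andP[-> _] /and3P[-> -> _] _ _]. Qed.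

Lemma Inv0 : Inv [set a; b] set0.
Proof.
have aA : a \in [set a; b] by rewrite !inE eqxx.
have bA : b \in [set a; b] by rewrite !inE eqxx orbT.
split => //.
- by apply/subsetP => z; rewrite !inE => /orP[]/eqP->.
- by rewrite cards0 cards2 ab.
split; first by move=> t; rewrite inE.
move=> x; rewrite !inE => /orP[]/eqP->.
  exists b; split; first exact: R_refl.
  by apply: R3; rewrite ?rab 1?rsym ?rab ?aA ?bA ?/cnd ?eqxx.
exists a; split; last exact: R_refl.
by apply: R3; rewrite ?rab 1?rsym ?rab ?aA ?bA ?/cnd ?eqxx.
Qed.


Lemma Inv_step A Tr z y : Inv A Tr -> z \in A -> y \in S -> y \notin A -> r z y ->
  exists Tr', Inv (y |: A) Tr'.
Proof.
case=> aA bA AS cT [tP wP] zA yS yA rzy.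
have [w [R1 R2]] := wP z zA.
have [rzw _ wA] := R_in R1.
set t := (z, [set y; w]).
have tT : t \notin Tr.
  apply/negP => /tP [/subsetP sub _]; by move: yA; rewrite sub // !inE eqxx.
have sA : A \subset y |: A by apply/subsetP => v vA; rewrite !inE vA orbT.
have sT : Tr \subset t |: Tr by apply/subsetP => v vA; rewrite !inE vA orbT.
have yA' : y \in y |: A by rewrite !inE eqxx.
have tT' : t \in t |: Tr by rewrite !inE eqxx.
have ge2 : 2 <= #|A|.
  have := subset_leq_card (_ : [set a; b] \subset A); rewrite cards2 ab; apply.
  by apply/subsetP => v; rewrite !inE => /orP[]/eqP->.
exists (t |: Tr); split.
- by rewrite !inE aA orbT.
- by rewrite !inE bA orbT.
- by apply/subsetP => v; rewrite !inE => /orP[/eqP->//|/(subsetP AS)].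
- by rewrite !cardsU1 tT yA cT /= addnBA.
split.
  move=> t'; rewrite !inE => /orP[/eqP->|/tP[s1 s2]]; last first.
    by split=> //; apply: subset_trans sA.
  split.
    by apply/subsetP => v; rewrite !inE => /orP[]/eqP->; rewrite ?eqxx ?wA ?orbT.
  exists y, w; split => //.
  by apply/negP => /eqP E; move: yA; rewrite E wA.
move=> x; rewrite !inE => /orP[/eqP->|xA]; last first.
  have [c [H1 H2]] := wP x xA.
  by exists c; split; apply: R_mono H1 || apply: R_mono H2.
exists z; split.
  apply: R_trans (R_mono sA sT R1).
  apply: R3; rewrite ?rzy ?rzw 1?rsym ?rzy ?rzw ?inE ?zA ?wA ?eqxx ?orbT //.
  by rewrite /cnd tT' orbT.
apply: R_trans (R_mono sA sT R2) _.
apply: R3; rewrite ?rzy ?rzw 1?rsym ?rzy ?rzw ?inE ?zA ?wA ?eqxx ?orbT //.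
by rewrite /cnd setUC tT' orbT.
Qed.

Lemma grow : exists Tr, Inv S Tr.
Proof.
suff H : forall k A Tr, #|S| - #|A| <= k -> Inv A Tr -> exists Tr, Inv S Tr.
  by apply: (H _ _ _ (leqnn _) Inv0).
elim=> [|k IH] A Tr hk hI.
  have ES : A = S.
    apply/eqP; rewrite eqEcard; case: hI => _ _ -> _ _ /=; by rewrite -subn_eq0 -leqn0.
  by exists Tr; rewrite -ES.
case: (eqVneq A S) => [ES|nE]; first by exists Tr; rewrite -ES.
have [aA _ AS _ _] := hI.
have [z [y [zA yS yA rzy]]] := exitP aA AS nE.
have [Tr' hI'] := Inv_step hI zA yS yA rzy.
apply: (IH _ _ _ hI'); rewrite cardsU1 yA /=.
by move: hk; rewrite add1n subnS; case: (_ - _).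
Qed.

End W.

Section G.
Variable T : finType.
Variable e : rel T.
Hypothesis esym : symmetric e.
Hypothesis eirr : irreflexive e.

Definition lwalks (C : {set T}) (Tr : {set T * {set T}}) :=
  forall u v, u \in C -> v \in C ->
    exists p, [/\ walk e u p, last u p = v & compatible Tr u p].

Lemma grow_final (r : rel T) (rsym : symmetric r) (sub : subrel r e) (S : {set T}) a b :
  a != b -> r a b -> a \in S -> b \in S ->
  (forall A : {set T}, a \in A -> A \subset S -> A != S ->
     exists z y, [/\ z \in A, y \in S, y \notin A & r z y]) ->
  exists Tr, [/\ transition_set e Tr, #|Tr| = #|S| - 2,
     (forall t, t \in Tr -> tprop r t) & lwalks S Tr].
Proof.
move=> ab rab aS bS exitP.
have [Tr [aA bA _ cT [tP wP]]] := grow rsym ab rab aS bS exitP.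
exists Tr; split => //.
- move=> t /tP [_ [x [y [xy rx ry E]]]]; exists x, y; split => //.
    by rewrite esym; apply: sub.
  exact: sub.
- by move=> t /tP[].
move=> u v uS vS.
have [c [H1 _]] := wP u uS; have [d [_ H2]] := wP v vS.
have [s [p _ cc [q E]]] := R_trans H1 H2.
exists (c :: s); split.
- exact: sub_path p.
- by have := congr1 (last u) E; rewrite last_cat /=.
- by apply/compatibleE.
Qed.

Lemma ce_sym : symmetric (compl_rel e).
Proof. by move=> x y; rewrite /compl_rel eq_sym esym. Qed.

Definition cof x := [set y | connect (compl_rel e) x y].

Lemma cocompP C : C \in cocomponents e -> exists x, C = cof x.
Proof. by case/imsetP => x _ ->; exists x. Qed.

Lemma cof_eq x y : y \in cof x -> cof y = cof x.
Proof.
rewrite inE => H; apply/setP => z; rewrite !inE.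
by rewrite (same_connect (sym_connect_sym ce_sym) H).
Qed.

Lemma co_same C C' x : C \in cocomponents e -> C' \in cocomponents e ->
  x \in C -> x \in C' -> C = C'.
Proof.
move=> /cocompP[y ->] /cocompP[y' ->] h h'.
by rewrite -(cof_eq h) -(cof_eq h').
Qed.

Lemma join C u v : C \in cocomponents e -> u \in C -> v \notin C -> e u v.
Proof.
move=> /cocompP[x ->]; rewrite !inE => hu hv.
have uv : u != v by apply: contraNneq hv => <-.
apply/negPn/negP => ne; move/negP: hv; apply.
apply: connect_trans hu (connect1 _); by rewrite /compl_rel uv ne.
Qed.

Lemma cross (r : rel T) (A : {set T}) x y : connect r x y -> x \in A -> y \notin A ->
  exists z y', [/\ z \in A, y' \notin A & r z y'].
Proof.
move/connectP => [p pp ->]; elim: p x pp => [|x1 p IH] x /=.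
  by move=> _ xA; rewrite xA.
move=> /andP[rx pp] xA yA; case x1A: (x1 \in A).
  exact: IH pp x1A yA.
by exists x, x1; rewrite x1A.
Qed.

Definition g (C : {set T}) :=
  if 1 < #|C| then (if induced_connectedb e C then #|C| - 2 else #|C| - 1) else 0.

Lemma comp_lemma C : graph_connected e -> C \in cocomponents e ->
  exists Tr, [/\ transition_set e Tr, #|Tr| = g C,
    (forall t, t \in Tr -> t.2 \subset C) & lwalks C Tr].
Proof.
move=> gc cC.
case: (ltnP 1 #|C|) => hC; last first.
  exists set0; split.
  - by move=> t; rewrite inE.
  - by rewrite cards0 /g ltnNge hC.
  - by move=> t; rewrite inE.
  move=> u v uC vC; have /card_le1_eqP H := hC.
  have E := H u v uC vC.
  by exists [::]; split => //.
case ic: (induced_connectedb e C).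
  pose r := induced_rel e C.
  have rsym : symmetric r.
    move=> x y; rewrite /r /induced_rel esym.
    by case: (x \in C); case: (y \in C); rewrite ?andbF.
  have sub : subrel r e by move=> x y /and3P[].
  have rC x y : r x y -> x \in C /\ y \in C by case/and3P.
  have con x y : x \in C -> y \in C -> connect r x y.
    move=> xC yC; move: ic => /forall_inP/(_ x xC)/forall_inP/(_ y yC); exact.
  have [u [v [uC vC uv]]] := card_gt1P hC.
  have [b rub] : exists b, r u b.
    case/connectP: (con u v uC vC) => [[|b p]] /=; first by move=> _ E; rewrite E eqxx in uv.
    by case/andP => rub _ _; exists b.
  have ub : u != b by apply: contraTneq rub => ->; rewrite /r /induced_rel eirr.
  have exitP : forall A : {set T}, u \in A -> A \subset C -> A != C ->
     exists z y, [/\ z \in A, y \in C, y \notin A & r z y].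
    move=> A uA AS nE.
    have : ~~ (C \subset A) by move: nE; rewrite eqEsubset AS.
    case/subsetPn => y0 y0C y0A.
    have [z [y [zA yA rzy]]] := cross (con u y0 uC y0C) uA y0A.
    by exists z, y; split => //; exact: (proj2 (rC _ _ rzy)).
  have [Tr [h1 h2 h3 h4]] := grow_final rsym sub ub rub uC (proj2 (rC _ _ rub)) exitP.
  exists Tr; split => //.
  - by rewrite h2 /g hC ic.
  - move=> t /h3 [x [y [_ rx ry ->]]].
    by apply/subsetP => z; rewrite !inE => /orP[]/eqP->; [exact: (proj2 (rC _ _ rx)) | exact: (proj2 (rC _ _ ry))].
have [w wC] : exists w, w \notin C.
  case: (pickP (fun w => w \notin C)) => [w ?|H]; first by exists w.
  move/negP: ic; elim; apply/forall_inP => x xC; apply/forall_inP => y yC.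
  have E : induced_rel e C =2 e.
    move=> x' y'; rewrite /induced_rel.
    by have := H x'; have := H y'; rewrite /= => /negbFE-> /negbFE->; rewrite !andbT.
  by rewrite (eq_connect E) gc.
pose r := fun x y => e x y && (((x == w) && (y \in C)) || ((y == w) && (x \in C))).
have rsym : symmetric r by move=> x y; rewrite /r esym orbC.
have sub : subrel r e by move=> x y /andP[].
have [c1 c1C] : exists c1, c1 \in C by apply/card_gt0P; apply: ltnW.
have wc1 : w != c1 by apply: contraNneq wC => ->.
have ewC y : y \in C -> r w y.
  by move=> yC; rewrite /r eqxx yC /= andbT esym (join cC yC wC).
have wS : w \in w |: C by rewrite !inE eqxx.
have c1S : c1 \in w |: C by rewrite !inE c1C orbT.
have exitP : forall A : {set T}, w \in A -> A \subset w |: C -> A != w |: C ->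
     exists z y, [/\ z \in A, y \in w |: C, y \notin A & r z y].
  move=> A wA AS nE.
  have : ~~ (w |: C \subset A) by move: nE; rewrite eqEsubset AS.
  case/subsetPn => y0; rewrite !inE => /orP[/eqP->|y0C] y0A; first by rewrite wA in y0A.
  by exists w, y0; split => //; [rewrite !inE y0C orbT | exact: ewC].
have [Tr [h1 h2 h3 h4]] := grow_final rsym sub wc1 (ewC _ c1C) wS c1S exitP.
exists Tr; split => //.
- by rewrite h2 /g hC ic cardsU1 wC add1n subSS.
- move=> t /h3 [x [y [xy]]]; rewrite /r => /andP[_ rx] /andP[_ ry] ->.
  case: (eqVneq t.1 w) => [hw|hw].
    move: rx ry; rewrite hw eqxx (negPf wC) !andbF !orbF /= => xC yC.
    by apply/subsetP => z; rewrite !inE => /orP[]/eqP->.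
  move: rx ry; rewrite (negPf hw) /= => /andP[/eqP xw _] /andP[/eqP yw _].
  by move: xy; rewrite xw yw eqxx.
- move=> u v uC vC; apply: h4; by rewrite !inE ?uC ?vC orbT.
Qed.

Lemma walks_mono C (Tr Tr' : {set T * {set T}}) : Tr \subset Tr' -> lwalks C Tr -> lwalks C Tr'.
Proof.
move=> sT H u v uC vC; have [p [h1 h2 h3]] := H u v uC vC.
exists p; split => //; apply/compatibleE; apply: comp_mono sT _; exact/compatibleE.
Qed.

Lemma global : graph_connected e -> forall K : {set {set T}}, K \subset cocomponents e ->
  exists Tr, [/\ transition_set e Tr, #|Tr| = \sum_(C in K) g C,
    (forall t, t \in Tr -> exists2 C, C \in K & t.2 \subset C) &
    forall C, C \in K -> lwalks C Tr].
Proof.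
move=> gc K; have [n] := ubnP #|K|; elim: n K => // n IH K hn sK.
case: (set_0Vmem K) => [->|[C0 C0K]].
  exists set0; split; rewrite ?big_set0 ?cards0 //.
  - by move=> t; rewrite inE.
  - by move=> t; rewrite inE.
  - by move=> C; rewrite inE.
have hn' : #|K :\ C0| < n by move: hn; rewrite (cardsD1 C0) C0K.
have sK' : K :\ C0 \subset cocomponents e := subset_trans (subD1set K C0) sK.
have [Tr' [h1 h2 h3 h4]] := IH _ hn' sK'.
have C0c : C0 \in cocomponents e := subsetP sK _ C0K.
have [Tr0 [t1 t2 t3 t4]] := comp_lemma gc C0c.
have sl : Tr' \subset Tr' :|: Tr0 by apply/subsetP => t ht; rewrite inE ht.
have sr : Tr0 \subset Tr' :|: Tr0 by apply/subsetP => t ht; rewrite inE ht orbT.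
exists (Tr' :|: Tr0); split.
- by move=> t; rewrite inE => /orP[]; [apply: h1 | apply: t1].
- rewrite cardsU (big_setD1 _ C0K) /=.
  have -> : Tr' :&: Tr0 = set0.
    apply/setP => t; rewrite !inE; apply/negP => /andP[tA tB].
    have [C' C'K sub'] := h3 t tA.
    have sub0 := t3 t tB.
    have [x [y [_ _ _ E]]] := t1 t tB.
    have xt : x \in t.2 by rewrite E !inE eqxx.
    have EC := co_same (subsetP sK' _ C'K) C0c (subsetP sub' _ xt) (subsetP sub0 _ xt).
    by move: C'K; rewrite EC !inE eqxx.
  by rewrite cards0 subn0 h2 t2 addnC.
- move=> t; rewrite inE => /orP[/h3 [C CK sub]|tB].
    by exists C => //; apply: (subsetP (subD1set K C0)).
  by exists C0 => //; apply: t3.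
move=> C CK; case: (eqVneq C C0) => [->|ne].
  exact: walks_mono sr t4.
by apply: walks_mono sl (h4 _ _); rewrite !inE ne CK.
Qed.

End G.

Unset Implicit Arguments.

Theorem theorem3 (T : finType) (e : rel T) :
  simple_graph e -> graph_connected e -> 1 < #|T| ->
  exists Tr : {set T * {set T}},
    [/\ transition_set e Tr, T_connected e Tr & #|Tr| = tau e].
Proof.
move=> [esym eirr] gc _.
have [Tr [h1 h2 h3 h4]] := global esym eirr gc (subxx (cocomponents e)).
exists Tr; split => //.
  move=> u v.
  have uc : cof e u \in cocomponents e by apply/imsetP; exists u.
  have uu : u \in cof e u by rewrite inE connect0.
  case vc: (v \in cof e u).
    exact: h4 uc u v uu vc.
  have euv := join uc uu (negbT vc).
  exists [:: v]; split; [by rewrite /walk /= euv | by [] | by move=> [|i]].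
by rewrite h2 /tau big_mkcondr.
Qed.
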